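(* Suppose Assumptions 1 and 4 hold. Let $\beta_E\in\big(0,\tfrac12\min\{\bar\chi,\tfrac1{2d^*}\}\big)$, $\delta>\frac1{2\beta_E}$, and let $\sigma,\gamma,\tau>0$ be such that $\bar\Phi-\delta I$ is positive semidefinite. Then, with respect to the inner product $\langle u,v\rangle_{\bar\Phi}=u^T\bar\Phi v$: (i) $\bar\Phi^{-1}\bar{\mathfrak A}$ is maximally monotone and $\mathcal T_1=(\mathrm{Id}+\bar\Phi^{-1}\bar{\mathfrak A})^{-1}$ is $\tfrac12$-averaged; (ii) $\bar\Phi^{-1}\bar{\mathfrak B}$ is $\delta\beta_E$-cocoercive and $\mathcal T_2=\mathrm{Id}-\bar\Phi^{-1}\bar{\mathfrak B}$ is $\frac1{2\delta\beta_E}$-averaged; (iii) $\mathcal T=\mathcal T_1\circ\mathcal T_2$ is $\frac{2\delta\beta_E}{4\delta\beta_E-1}$-averaged.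
   Context: Same setting as for the partial-decision operators: players $i=1,\dots,N$, $x_i\in\Omega_i\subseteq\mathbb R^{n_i}$, $\Omega=\prod\Omega_i\subseteq\mathbb R^n$, costs $f_i$ defined and $C^1$ in $x_i$ on $\mathbb R^n$, data $A_i\in\mathbb R^{m\times n_i}$, $b_i\in\mathbb R^m$, $X=\Omega\cap\{\sum A_ix_i=\sum b_i\}$. Assumption 1: each $\Omega_i$ closed convex with nonempty interior; $X$ and each $\{x_i\in\Omega_i:(x_i,x_{-i})\in X\}$ have nonempty relative interior; $f_i$ convex in $x_i$. Graph: connected undirected, $N$ nodes, $M$ arbitrarily oriented edges, incidence $V$ ($V_{il}=1$ if $e_l$ points to $i$, $-1$ if starts at $i$, $0$ else), $L=VV^T$, $d^*=\max_iL_{ii}$; $\mathbf V=V\otimes I_m$, $\mathbf L=L\otimes I_n$, $\mathbf A=\mathrm{diag}(A_i)$, $\mathbf b=\mathrm{col}(b_i)$. $\mathbf x=\mathrm{col}(x^{(1)},\dots,x^{(N)})\in\mathbb R^{Nn}$; $\mathcal R_i=[0_{n_i\times n_{<i}}\ I_{n_i}\ 0_{n_i\times n_{>i}}]$, $\mathcal R=\mathrm{diag}(\mathcal R_i)$; $\mathbf F(\mathbf x)=\mathrm{col}(\nabla_{x_i}f_i(x^{(i)}))_i$. Assumption 4: $\langle\mathbf x-\mathbf x',\mathcal R^T\mathbf F(\mathbf x)-\mathcal R^T\mathbf F(\mathbf x')\rangle\ge\bar\chi\|\mathbf F(\mathbf x)-\mathbf F(\mathbf x')\|^2$ for all $\mathbf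 x,\mathbf x'$, $\bar\chi>0$. $\bar{\mathfrak A}(\mathbf W)=\mathrm{col}(-\mathbf V\mathbf z-\mathbf A\mathcal R\mathbf x,\mathbf V^T\Lambda,\mathcal R^TN_\Omega(\mathcal R\mathbf x)+\mathcal R^T\mathbf A^T\Lambda)$, $\bar{\mathfrak B}(\mathbf W)=\mathrm{col}(\mathbf b,\mathbf 0,\mathcal R^T\mathbf F(\mathbf x)+\mathbf L\mathbf x)$, $\bar\Phi=\begin{pmatrix}\sigma^{-1}I&\mathbf V&\mathbf A\mathcal R\\ \mathbf V^T&\gamma^{-1}I&0\\ \mathcal R^T\mathbf A^T&0&\tau^{-1}I\end{pmatrix}$. $S$ is $\alpha$-averaged if $S=(1-\alpha)\mathrm{Id}+\alpha R$ with $R$ nonexpansive; $\beta$-cocoercive means $\langle u-v,Su-Sv\rangle\ge\beta\|Su-Sv\|^2$. *)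

(* Defs.v *)
From HB Require Import structures.
From mathcomp Require Import all_boot.
From Stdlib Require Import Reals Relations.

Set Implicit Arguments.
Unset Strict Implicit.
Unset Printing Implicit Defensive.

HB.instance Definition _ :=
  Monoid.isComLaw.Build R 0%R Rplus
    (fun a b c => Logic.eq_sym (Rplus_assoc a b c)) Rplus_comm Rplus_0_l.

Local Open Scope R_scope.

Definition rsum {T : finType} (F : T -> R) : R := \big[Rplus/0]_(t : T) F t.
Definition dot {T : finType} (u v : T -> R) : R := rsum (fun t => u t * v t).
Definition vnorm {T : finType} (u : T -> R) : R := sqrt (dot u u).
Definition vadd {T : Type} (u v : T -> R) : T -> R := fun t => u t + v t.
Definition vsub {T : Type} (u v : T -> R) : T -> R := fun t => u t - v t.
Definition vscale {T : Type} (a : R) (u : T -> R) : T -> R := fun t => a * u t.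
Definition vzero {T : Type} : T -> R := fun _ => 0.

Definition closed_vset {T : finType} (S : (T -> R) -> Prop) : Prop :=
  forall x, ~ S x -> exists eps, 0 < eps /\ forall y, vnorm (vsub y x) < eps -> ~ S y.
Definition convex_vset {T : finType} (S : (T -> R) -> Prop) : Prop :=
  forall x y t, S x -> S y -> 0 <= t <= 1 ->
    S (vadd (vscale t x) (vscale (1 - t) y)).
Definition has_nonempty_interior {T : finType} (S : (T -> R) -> Prop) : Prop :=
  exists x eps, 0 < eps /\ forall y, vnorm (vsub y x) < eps -> S y.
Definition in_affine_hull {T : finType} (S : (T -> R) -> Prop) (y : T -> R) : Prop :=
  exists l : list (R * (T -> R)),
    List.Forall (fun p => S (snd p)) l /\
    List.fold_right (fun p acc => fst p + acc) 0 l = 1 /\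
    y = List.fold_right (fun p acc => vadd (vscale (fst p) (snd p)) acc) vzero l.
Definition in_rel_interior {T : finType} (S : (T -> R) -> Prop) (x : T -> R) : Prop :=
  S x /\ exists eps, 0 < eps /\
    forall y, in_affine_hull S y -> vnorm (vsub y x) < eps -> S y.
Definition nonempty_rel_interior {T : finType} (S : (T -> R) -> Prop) : Prop :=
  exists x, in_rel_interior S x.
Definition normal_cone {T : finType} (S : (T -> R) -> Prop) (x v : T -> R) : Prop :=
  S x /\ forall y, S y -> dot v (vsub y x) <= 0.

(* index set of R^n, n = sum_i n_i : pairs (i, k) with k < n_i *)
Definition Tn (N : nat) (nd : 'I_N -> nat) : finType := {i : 'I_N & 'I_(nd i)}.
(* R^{Nn} : N copies x^(1..N) of R^n *)
Definition TNn (N : nat) (nd : 'I_N -> nat) : finType := ('I_N * Tn nd)%type.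
Definition TNm (N m : nat) : finType := ('I_N * 'I_m)%type.
Definition TMm (M m : nat) : finType := ('I_M * 'I_m)%type.
(* W = col(Lambda, z, x) in R^{Nm} x R^{Mm} x R^{Nn} *)
Definition TW (N M m : nat) (nd : 'I_N -> nat) : finType :=
  ((TNm N m + TMm M m) + TNn nd)%type.

Section Game.
Variables (N M m : nat) (nd : 'I_N -> nat).

Definition OmegaP (Om : forall i : 'I_N, ('I_(nd i) -> R) -> Prop)
  (y : Tn nd -> R) : Prop :=
  forall i : 'I_N, Om i (fun k => y (existT _ i k)).
Definition Xset (Om : forall i : 'I_N, ('I_(nd i) -> R) -> Prop)
  (Am : forall i : 'I_N, 'I_m -> 'I_(nd i) -> R) (bv : 'I_N -> 'I_m -> R)
  (y : Tn nd -> R) : Prop :=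
  OmegaP Om y /\
  forall r : 'I_m,
    rsum (fun i : 'I_N => rsum (fun k : 'I_(nd i) => Am i r k * y (existT _ i k)))
    = rsum (fun i : 'I_N => bv i r).
(* replace block i of y in R^n by u in R^{n_i} : (u, y_{-i}) *)
Definition upd (y : Tn nd -> R) (i : 'I_N) (u : 'I_(nd i) -> R) : Tn nd -> R :=
  fun t => let: existT j k := t in
    if j == i then oapp u 0 (insub (val k) : option 'I_(nd i)) else y t.
Definition blk (y : Tn nd -> R) (i : 'I_N) : 'I_(nd i) -> R :=
  fun k => y (existT _ i k).

(* graph: edge l goes from src l to dst l *)
Definition Vinc (src dst : 'I_M -> 'I_N) (i : 'I_N) (l : 'I_M) : R :=
  if dst l == i then 1 else if src l == i then -1 else 0.
Definition Lap (src dst : 'I_M -> 'I_N) (i j : 'I_N) : R :=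
  rsum (fun l : 'I_M => Vinc src dst i l * Vinc src dst j l).
Definition dstar (src dst : 'I_M -> 'I_N) : R :=
  \big[Rmax/0]_(i : 'I_N) Lap src dst i i.
Definition adjacent (src dst : 'I_M -> 'I_N) (i j : 'I_N) : Prop :=
  exists l, (src l = i /\ dst l = j) \/ (src l = j /\ dst l = i).
(* connected undirected simple graph (edges arbitrarily oriented) *)
Definition connected_simple_graph (src dst : 'I_M -> 'I_N) : Prop :=
  (0 < N)%nat /\
  (forall l, src l <> dst l) /\
  (forall l l', ((src l = src l' /\ dst l = dst l') \/
                 (src l = dst l' /\ dst l = src l')) -> l = l') /\
  (forall i j, clos_refl_trans _ (adjacent src dst) i j).

(* bold V z, with bold V = V (x) I_m *)
Definition Vz (src dst : 'I_M -> 'I_N) (z : TMm M m -> R) : TNm N m -> R :=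
  fun p => rsum (fun l : 'I_M => Vinc src dst p.1 l * z (l, p.2)).
Definition VTl (src dst : 'I_M -> 'I_N) (lam : TNm N m -> R) : TMm M m -> R :=
  fun p => rsum (fun i : 'I_N => Vinc src dst i p.1 * lam (i, p.2)).
(* R x : R^{Nn} -> R^n, (R x)_i = x^(i)_i *)
Definition Rsel (x : TNn nd -> R) : Tn nd -> R :=
  fun t => x (tag t, t).
Definition RselT (y : Tn nd -> R) : TNn nd -> R :=
  fun p => if tag p.2 == p.1 then y p.2 else 0.
Definition Aop (Am : forall i : 'I_N, 'I_m -> 'I_(nd i) -> R) (y : Tn nd -> R)
  : TNm N m -> R :=
  fun p => rsum (fun k : 'I_(nd p.1) => Am p.1 p.2 k * y (existT _ p.1 k)).
Definition AopT (Am : forall i : 'I_N, 'I_m -> 'I_(nd i) -> R) (lam : TNm N m -> R)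
  : Tn nd -> R :=
  fun t => let: existT i k := t in rsum (fun r : 'I_m => Am i r k * lam (i, r)).
Definition bvec (bv : 'I_N -> 'I_m -> R) : TNm N m -> R := fun p => bv p.1 p.2.
(* bold L x, bold L = L (x) I_n *)
Definition Lx (src dst : 'I_M -> 'I_N) (x : TNn nd -> R) : TNn nd -> R :=
  fun p => rsum (fun j : 'I_N => Lap src dst p.1 j * x (j, p.2)).
Definition Fvec (gradf : forall i : 'I_N, (Tn nd -> R) -> ('I_(nd i) -> R))
  (x : TNn nd -> R) : Tn nd -> R :=
  fun t => let: existT i k := t in gradf i (fun s => x (i, s)) k.

Definition Wl (W : TW M m nd -> R) : TNm N m -> R := fun t => W (inl (inl t)).
Definition Wz (W : TW M m nd -> R) : TMm M m -> R := fun t => W (inl (inr t)).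
Definition Wx (W : TW M m nd -> R) : TNn nd -> R := fun t => W (inr t).
Definition mkW (l : TNm N m -> R) (z : TMm M m -> R) (x : TNn nd -> R)
  : TW M m nd -> R :=
  fun s => match s with
           | inl (inl t) => l t
           | inl (inr t) => z t
           | inr t => x t
           end.

Definition frakA (src dst : 'I_M -> 'I_N)
  (Om : forall i : 'I_N, ('I_(nd i) -> R) -> Prop)
  (Am : forall i : 'I_N, 'I_m -> 'I_(nd i) -> R)
  (W U : TW M m nd -> R) : Prop :=
  exists v : Tn nd -> R,
    normal_cone (OmegaP Om) (Rsel (Wx W)) v /\
    U = mkW (vsub (vscale (-1) (Vz src dst (Wz W))) (Aop Am (Rsel (Wx W))))
            (VTl src dst (Wl W))
            (vadd (RselT v) (RselT (AopT Am (Wl W)))).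
Definition frakB (src dst : 'I_M -> 'I_N)
  (Am : forall i : 'I_N, 'I_m -> 'I_(nd i) -> R) (bv : 'I_N -> 'I_m -> R)
  (gradf : forall i : 'I_N, (Tn nd -> R) -> ('I_(nd i) -> R))
  (W : TW M m nd -> R) : TW M m nd -> R :=
  mkW (bvec bv) vzero (vadd (RselT (Fvec gradf (Wx W))) (Lx src dst (Wx W))).
(* the preconditioning matrix bar Phi, as a linear map *)
Definition PhiApp (src dst : 'I_M -> 'I_N)
  (Am : forall i : 'I_N, 'I_m -> 'I_(nd i) -> R) (sigma gamma tau : R)
  (W : TW M m nd -> R) : TW M m nd -> R :=
  mkW (vadd (vadd (vscale (/ sigma) (Wl W)) (Vz src dst (Wz W))) (Aop Am (Rsel (Wx W))))
      (vadd (VTl src dst (Wl W)) (vscale (/ gamma) (Wz W)))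
      (vadd (RselT (AopT Am (Wl W))) (vscale (/ tau) (Wx W))).

End Game.

Section OpTheory.
Variable T : finType.
Variable P : (T -> R) -> (T -> R).

Definition ipP (u v : T -> R) : R := dot u (P v).
Definition normP (u : T -> R) : R := sqrt (ipP u u).

(* set-valued operator given by its graph *)
Definition monotoneP (G : (T -> R) -> (T -> R) -> Prop) : Prop :=
  forall w u w' u', G w u -> G w' u' -> 0 <= ipP (vsub w w') (vsub u u').
Definition max_monotoneP (G : (T -> R) -> (T -> R) -> Prop) : Prop :=
  monotoneP G /\
  forall w u, (forall w' u', G w' u' -> 0 <= ipP (vsub w w') (vsub u u')) -> G w u.
Definition nonexpansiveP (S : (T -> R) -> (T -> R)) : Prop :=
  forall u v, normP (vsub (S u) (S v)) <= normP (vsub u v).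
Definition averagedP (alpha : R) (S : (T -> R) -> (T -> R)) : Prop :=
  exists Rop, nonexpansiveP Rop /\
    forall w, S w = vadd (vscale (1 - alpha) w) (vscale alpha (Rop w)).
Definition cocoerciveP (beta : R) (S : (T -> R) -> (T -> R)) : Prop :=
  forall u v, beta * (normP (vsub (S u) (S v))) ^ 2 <= ipP (vsub u v) (vsub (S u) (S v)).
End OpTheory.

Definition is_inverse {T : Type} (P Q : (T -> R) -> (T -> R)) : Prop :=
  (forall w, P (Q w) = w) /\ (forall w, Q (P w) = w).

Arguments upd {N nd} y i u _.
Arguments blk {N nd} y i _.

(* Main.v *)
Require Import Defs.
From HB Require Import structures.
From mathcomp Require Import all_boot.
From Stdlib Require Import Reals Lra Psatz FunctionalExtensionality ClassicalEpsilon Classical.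
Local Open Scope R_scope.

Set Implicit Arguments.

Section Sums.
Variable T : finType.
Implicit Types F G u v w : T -> R.

Lemma rsum_ext F G : (forall t, F t = G t) -> rsum F = rsum G.
Proof. move=> H; rewrite /rsum; apply: eq_bigr => t _; exact: H. Qed.

Lemma rsum_add F G : rsum (fun t => F t + G t) = rsum F + rsum G.
Proof. by rewrite /rsum big_split. Qed.

Lemma rsum_scale a F : rsum (fun t => a * F t) = a * rsum F.
Proof.
rewrite /rsum; apply: (big_ind2 (fun x y => x = a * y)); first by ring.
- by move=> x1 x2 y1 y2 -> ->; ring.
- by [].
Qed.

Lemma rsum_opp F : rsum (fun t => - F t) = - rsum F.
Proof. rewrite -(rsum_ext (fun t => (-1) * F t)) ?rsum_scale; [ring | move=> t; ring]. Qed.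

Lemma rsum_sub F G : rsum (fun t => F t - G t) = rsum F - rsum G.
Proof.
rewrite (rsum_ext _ (fun t => F t + - G t)); last by move=> t; ring.
by rewrite rsum_add rsum_opp.
Qed.

Lemma rsum_le F G : (forall t, F t <= G t) -> rsum F <= rsum G.
Proof.
move=> H; rewrite /rsum; apply: (big_ind2 (fun x y => x <= y)); first lra.
- by move=> *; lra.
- by move=> t _; apply: H.
Qed.

Lemma rsum_ge0 F : (forall t, 0 <= F t) -> 0 <= rsum F.
Proof.
move=> H; rewrite /rsum; apply: (big_ind (fun x => 0 <= x)); first lra.
- by move=> *; lra.
- by move=> t _; apply: H.
Qed.

Lemma rsum_zero : rsum (fun _ : T => 0) = 0.
Proof. by rewrite /rsum big1. Qed.

Lemma rsum_term F t0 : (forall t, 0 <= F t) -> F t0 <= rsum F.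
Proof.
move=> H; rewrite /rsum (bigD1 t0) //=.
suff: 0 <= \big[Rplus/0]_(i | i != t0) F i by lra.
apply: (big_ind (fun x => 0 <= x)); first lra.
- by move=> *; lra.
- by move=> t _; apply: H.
Qed.

Lemma rsum_eq0 F : (forall t, 0 <= F t) -> rsum F = 0 -> forall t, F t = 0.
Proof. move=> H H0 t; have := @rsum_term F t H; have := H t; lra. Qed.

Lemma dot_ge0 u : 0 <= dot u u.
Proof. apply: rsum_ge0 => t; nra. Qed.

Lemma dot_sym u v : dot u v = dot v u.
Proof. apply: rsum_ext => t; ring. Qed.

Lemma dot_vaddl u v w : dot (vadd u v) w = dot u w + dot v w.
Proof. rewrite /dot -rsum_add; apply: rsum_ext => t; rewrite /vadd; ring. Qed.
Lemma dot_vaddr u v w : dot w (vadd u v) = dot w u + dot w v.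
Proof. rewrite /dot -rsum_add; apply: rsum_ext => t; rewrite /vadd; ring. Qed.
Lemma dot_vsubl u v w : dot (vsub u v) w = dot u w - dot v w.
Proof. rewrite /dot -rsum_sub; apply: rsum_ext => t; rewrite /vsub; ring. Qed.
Lemma dot_vsubr u v w : dot w (vsub u v) = dot w u - dot w v.
Proof. rewrite /dot -rsum_sub; apply: rsum_ext => t; rewrite /vsub; ring. Qed.
Lemma dot_vscalel a u w : dot (vscale a u) w = a * dot u w.
Proof. rewrite /dot -rsum_scale; apply: rsum_ext => t; rewrite /vscale; ring. Qed.
Lemma dot_vscaler a u w : dot w (vscale a u) = a * dot w u.
Proof. rewrite /dot -rsum_scale; apply: rsum_ext => t; rewrite /vscale; ring. Qed.
Lemma dot_zerol w : dot vzero w = 0.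
Proof. rewrite /dot -(rsum_zero); apply: rsum_ext => t; rewrite /vzero; ring. Qed.
Lemma dot_zeror w : dot w vzero = 0.
Proof. rewrite /dot -(rsum_zero); apply: rsum_ext => t; rewrite /vzero; ring. Qed.

Lemma dot_eq0 u : dot u u = 0 -> u = vzero.
Proof.
move=> H; apply: functional_extensionality => t.
have := @rsum_eq0 (fun t => u t * u t) (fun t => ltac:(nra)) H t.
rewrite /vzero; nra.
Qed.

Lemma coord_le u t : (u t)^2 <= dot u u.
Proof. have := @rsum_term (fun t => u t * u t) t (fun t => ltac:(nra)); rewrite /dot; nra. Qed.

Lemma dot_sq_comb a (g e : T -> R) : dot (vadd (vscale a g) e) (vadd (vscale a g) e) =
  a * a * dot g g + 2 * a * dot g e + dot e e.
Proof. rewrite /dot -!rsum_scale -!rsum_add; apply: rsum_ext => t; rewrite /vadd /vscale; ring. Qed.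

End Sums.
Arguments rsum_ext {T}. Arguments rsum_add {T}. Arguments rsum_scale {T}.
Arguments rsum_opp {T}. Arguments rsum_sub {T}. Arguments rsum_le {T}.
Arguments rsum_ge0 {T}. Arguments rsum_zero {T}. Arguments rsum_term {T}.
Arguments rsum_eq0 {T}. Arguments dot_ge0 {T}. Arguments dot_sym {T}.
Arguments dot_vaddl {T}. Arguments dot_vaddr {T}. Arguments dot_vsubl {T}.
Arguments dot_vsubr {T}. Arguments dot_vscalel {T}. Arguments dot_vscaler {T}.
Arguments dot_zerol {T}. Arguments dot_zeror {T}. Arguments dot_eq0 {T}.
Arguments coord_le {T}.
Arguments dot_sq_comb {T}.

Unset Implicit Arguments.

Lemma arch_inv x : 0 < x -> exists N : nat, forall n : nat, le N n -> / (INR n + 1) < x.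
Proof.
move=> Hx; have [N [HN HN0]] := archimed_cor1 x Hx.
exists N => n Hn.
have H1 : 0 < INR N by apply: lt_0_INR.
have H2 : INR N <= INR n by apply: le_INR.
apply: Rle_lt_trans HN; apply: Rinv_le_contravar; lra.
Qed.

Lemma inf_ex (E : R -> Prop) (lb : R) :
  (forall r, E r -> lb <= r) -> (exists r, E r) ->
  exists d, (forall r, E r -> d <= r) /\
    forall eps, 0 < eps -> exists r, E r /\ r < d + eps.
Proof.
move=> Hlb [r0 Hr0].
have Hb : bound (fun r => E (- r)).
  exists (- lb) => r Hr; have := Hlb _ Hr; lra.
have Hne : exists x, (fun r => E (- r)) x by exists (- r0); rewrite Ropp_involutive.
have [m [Hm1 Hm2]] := completeness _ Hb Hne.
exists (- m); split.
- move=> r Hr; have : - r <= m by apply: Hm1; rewrite Ropp_involutive.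
  lra.
- move=> eps Heps; apply: NNPP => Hno.
  have : m <= m - eps; last lra.
  apply: Hm2 => r Hr.
  case: (Rle_or_lt r (m - eps)) => // Hlt.
  exfalso; apply: Hno; exists (- r); split => //; lra.
Qed.

Lemma abs_le_of_sq x e : 0 <= e -> x ^ 2 <= e ^ 2 -> Rabs x <= e.
Proof. move=> He H; rewrite /Rabs; case: Rcase_abs => _; nra. Qed.

Lemma abs_lt_of_sq x e : 0 < e -> x ^ 2 < e ^ 2 -> Rabs x < e.
Proof.
move=> He H; apply: Rnot_le_lt => Hle.
have := pow_incr _ _ 2 (conj (Rlt_le _ _ He) Hle); rewrite pow2_abs; lra.
Qed.

Section Min.
Variable T : finType.
Variable C : (T -> R) -> Prop.
Variable K : (T -> R) -> (T -> R).
Variable c : T -> R.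
Variable kappa : R.
Hypothesis Hkappa : 0 < kappa.
Hypothesis HC_closed : closed_vset C.
Hypothesis HC_convex : convex_vset C.
Hypothesis HC_ne : exists y, C y.
Hypothesis HKadd : forall u v, K (vadd u v) = vadd (K u) (K v).
Hypothesis HKscale : forall a u, K (vscale a u) = vscale a (K u).
Hypothesis HKsym : forall u v, dot u (K v) = dot v (K u).
Hypothesis HKpos : forall u, kappa * dot u u <= dot u (K u).

Lemma HKsub u v : K (vsub u v) = vsub (K u) (K v).
Proof.
have -> : vsub u v = vadd u (vscale (-1) v).
  by apply: functional_extensionality => t; rewrite /vsub /vadd /vscale; ring.
rewrite HKadd HKscale; apply: functional_extensionality => t.
rewrite /vsub /vadd /vscale; ring.
Qed.

Definition q (y : T -> R) := dot y (K y) - 2 * dot c y.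

Ltac expand := rewrite ?HKsub ?HKadd ?HKscale;
  repeat (rewrite dot_vsubl || rewrite dot_vsubr || rewrite dot_vaddl || rewrite dot_vaddr
    || rewrite dot_vscalel || rewrite dot_vscaler).

Lemma q_mid a b : q a + q b - 2 * q (vadd (vscale (/2) a) (vscale (1 - /2) b))
  = / 2 * dot (vsub a b) (K (vsub a b)).
Proof. rewrite /q; expand; rewrite (HKsym a b); field. Qed.

Lemma q_shift y u : q u = q y + 2 * dot (vsub (K y) c) (vsub u y)
  + dot (vsub u y) (K (vsub u y)).
Proof. rewrite /q; expand; rewrite (HKsym y u) (dot_sym (K y) u) (dot_sym (K y) y) (dot_sym c u) (dot_sym c y); ring. Qed.

Lemma q_conv y y' t : q (vadd (vscale t y') (vscale (1 - t) y)) =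
  q y + 2 * t * dot (vsub (K y) c) (vsub y' y) + t ^ 2 * dot (vsub y' y) (K (vsub y' y)).
Proof. rewrite /q; expand; rewrite ?(dot_sym (K y) _) ?(dot_sym (K y') _) (HKsym y y') ?(dot_sym c y') ?(dot_sym c y); ring. Qed.

Lemma q_lb y : - dot c c / kappa <= q y.
Proof.
have H1 := HKpos y.
have H2 := dot_ge0 (vsub (vscale kappa y) c).
move: H2; expand; rewrite (dot_sym y c) => H2.
rewrite /q.
have H3 : - dot c c <= kappa * (kappa * dot y y - 2 * dot c y) by nra.
apply: (Rmult_le_reg_l kappa) => //.
have -> : kappa * (- dot c c / kappa) = - dot c c by field; lra.
nra.
Qed.

Lemma quad_min : exists y, C y /\ forall y', C y' -> 0 <= dot (vsub (K y) c) (vsub y' y).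
Proof.
have [d [Hd Hinf]] := inf_ex (fun r => exists y, C y /\ r = q y) (- dot c c / kappa)
  ltac:(by move=> r [y [_ ->]]; apply: q_lb)
  ltac:(by case: HC_ne => y Hy; exists (q y), y).
have Hqd : forall y, C y -> d <= q y by move=> y Hy; apply: Hd; exists y.
have Hseq : forall n : nat, exists y, C y /\ q y < d + / (INR n + 1).
  move=> n; have Hp : 0 < / (INR n + 1).
    apply: Rinv_0_lt_compat; have := pos_INR n; lra.
  have [r [[y [Hy ->]] Hr]] := Hinf _ Hp; by exists y.
pose u n := proj1_sig (constructive_indefinite_description _ (Hseq n)).
have Hu : forall n, C (u n) /\ q (u n) < d + / (INR n + 1).
  move=> n; exact: (proj2_sig (constructive_indefinite_description _ (Hseq n))).
have Hcauchy : forall e, 0 < e -> exists N, forall n m, le N n -> le N m ->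
    dot (vsub (u n) (u m)) (vsub (u n) (u m)) <= e.
  move=> e He.
  have [N HN] := arch_inv (kappa * e / 4) ltac:(apply: Rdiv_lt_0_compat; nra).
  exists N => n m Hn Hm.
  have [Cn qn] := Hu n; have [Cm qm] := Hu m.
  have HN1 := HN n Hn; have HN2 := HN m Hm.
  have Hmid := Hqd _ (HC_convex (u n) (u m) (/ 2) Cn Cm ltac:(lra)).
  have Hid := q_mid (u n) (u m).
  have Hp := HKpos (vsub (u n) (u m)).
  have H0 := dot_ge0 (vsub (u n) (u m)).
  apply: (Rmult_le_reg_l kappa) => //; nra.
have Hcc : forall t, Cauchy_crit (fun n => u n t).
  move=> t eps Heps.
  have [N HN] := Hcauchy (eps ^ 2 / 2) ltac:(nra).
  exists N => n m Hn Hm; rewrite /Rdist.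
  have H1 := HN n m Hn Hm.
  have H2 : (u n t - u m t) ^ 2 <= dot (vsub (u n) (u m)) (vsub (u n) (u m))
    := coord_le (vsub (u n) (u m)) t.
  apply: abs_lt_of_sq => //; have := pow_lt eps 2 Heps; lra.
pose y t := proj1_sig (R_complete _ (Hcc t)).
have Hy : forall t, Un_cv (fun n => u n t) (y t).
  move=> t; exact: (proj2_sig (R_complete _ (Hcc t))).
pose cT := rsum (fun _ : T => 1).
have HcT : 0 <= cT by apply: rsum_ge0 => _; lra.
have Hunif : forall e, 0 < e -> exists N, forall n, le N n -> forall t, Rabs (u n t - y t) <= e.
  move=> e He; have [N HN] := Hcauchy (e ^ 2) ltac:(nra).
  exists N => n Hn t.
  apply: Rnot_lt_le => Hlt.
  have [M HM] := Hy t ((Rabs (u n t - y t) - e) / 2) ltac:(lra).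
  have HM1 := HM (Nat.max N M) ltac:(lia).
  have H1 := HN n (Nat.max N M) Hn ltac:(lia).
  have H2 : (u n t - u (Nat.max N M) t) ^ 2 <=
    dot (vsub (u n) (u (Nat.max N M))) (vsub (u n) (u (Nat.max N M)))
    := coord_le (vsub (u n) (u (Nat.max N M))) t.
  have H3 := abs_le_of_sq (u n t - u (Nat.max N M) t) e (Rlt_le _ _ He) ltac:(lra).
  rewrite /Rdist in HM1.
  have := Rabs_triang (u n t - u (Nat.max N M) t) (u (Nat.max N M) t - y t).
  have -> : u n t - u (Nat.max N M) t + (u (Nat.max N M) t - y t) = u n t - y t by ring.
  lra.
have Hdot : forall eta, 0 < eta -> exists N, forall n, le N n ->
    dot (vsub (u n) y) (vsub (u n) y) < eta.
  move=> eta Heta.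
  have Hp : 0 < eta / (cT + 1) by apply: Rdiv_lt_0_compat; lra.
  have [N HN] := Hunif (sqrt (eta / (cT + 1))) (sqrt_lt_R0 _ Hp).
  exists N => n Hn.
  have Hs := sqrt_sqrt _ (Rlt_le _ _ Hp).
  apply: (Rle_lt_trans _ (rsum (fun _ : T => eta / (cT + 1)))).
    apply: rsum_le => t; have := HN n Hn t; rewrite /vsub.
    move=> Hab; have Hx := Rabs_pos (u n t - y t).
    have -> : (u n t - y t) * (u n t - y t) = Rabs (u n t - y t) * Rabs (u n t - y t).
      by rewrite -Rabs_mult Rabs_pos_eq //; apply: Rle_0_sqr.
    rewrite -Hs; nra.
  rewrite (rsum_ext _ (fun _ => eta / (cT + 1) * 1)); last by move=> _; ring.
  rewrite rsum_scale -/cT.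
  apply: (Rmult_lt_reg_r (cT + 1)); first lra.
  have -> : eta / (cT + 1) * cT * (cT + 1) = eta * cT by field; lra.
  nra.
have HyC : C y.
  apply: NNPP => Hn.
  have [eps [Heps Hb]] := HC_closed y Hn.
  have [N HN] := Hdot (eps ^ 2) ltac:(nra).
  apply: (Hb (u N)); last exact: (proj1 (Hu N)).
  rewrite /vnorm.
  have -> : eps = sqrt (eps ^ 2) by rewrite sqrt_pow2 //; lra.
  apply: sqrt_lt_1_alt; split; [exact: dot_ge0 | exact: HN].
set g := vsub (K y) c.
have Hqy : q y <= d.
  apply: Rnot_lt_le => Hlt.
  set eps := q y - d.
  have Heps : 0 < eps by rewrite /eps; lra.
  have Hgg := dot_ge0 g.
  set eta := eps / (3 * (dot g g + 1)).
  have Heta : 0 < eta by apply: Rdiv_lt_0_compat; lra.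
  have [N1 HN1] := Hdot (eta * eps / 3) ltac:(apply: Rdiv_lt_0_compat; nra).
  have [N2 HN2] := arch_inv (eps / 3) ltac:(lra).
  pose n := Nat.max N1 N2.
  have H1 := HN1 n ltac:(lia).
  have H2 := HN2 n ltac:(lia).
  have [_ H3] := Hu n.
  have H4 := q_shift y (u n); rewrite -/g in H4.
  have H6 := dot_ge0 (vsub (u n) y).
  have H5 : 0 <= dot (vsub (u n) y) (K (vsub (u n) y)).
    have := HKpos (vsub (u n) y); nra.
  have H7 := dot_ge0 (vadd (vscale eta g) (vsub (u n) y)).
  rewrite dot_sq_comb in H7.
  have H8 : eta * dot g g < eps / 3.
    rewrite /eta.
    apply: (Rmult_lt_reg_r (3 * (dot g g + 1))); first lra.
    have -> : eps / (3 * (dot g g + 1)) * dot g g * (3 * (dot g g + 1)) = eps * dot g g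
      by field; lra.
    nra.
  have H9 : - 2 * dot g (vsub (u n) y) <= eta * dot g g +
      dot (vsub (u n) y) (vsub (u n) y) / eta.
    apply: (Rmult_le_reg_l eta) => //.
    have -> : eta * (eta * dot g g + dot (vsub (u n) y) (vsub (u n) y) / eta) =
      eta * eta * dot g g + dot (vsub (u n) y) (vsub (u n) y) by field; lra.
    nra.
  have H10 : dot (vsub (u n) y) (vsub (u n) y) / eta < eps / 3.
    apply: (Rmult_lt_reg_l eta) => //.
    have -> : eta * (dot (vsub (u n) y) (vsub (u n) y) / eta) =
      dot (vsub (u n) y) (vsub (u n) y) by field; lra.
    nra.
  rewrite /eps in H8 H10 H2; lra.
exists y; split => // y' Hy'.
apply: Rnot_lt_le => HG.
set G := dot g (vsub y' y) in HG.
set H := dot (vsub y' y) (K (vsub y' y)).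
have HH : 0 <= H by have := HKpos (vsub y' y); have := dot_ge0 (vsub y' y); rewrite /H; nra.
set t := - G / (H - G).
have Ht : 0 < t <= 1.
  rewrite /t; split; first by apply: Rdiv_lt_0_compat; lra.
  apply: (Rmult_le_reg_r (H - G)); first lra.
  have -> : - G / (H - G) * (H - G) = - G by field; lra.
  lra.
have Hz := Hqd _ (HC_convex y' y t Hy' HyC (conj (Rlt_le _ _ (proj1 Ht)) (proj2 Ht))).
rewrite q_conv -/g -/G -/H in Hz.
have Htt : t * (H - G) = - G by rewrite /t; field; lra.
nra.
Qed.

End Min.

Section Avg.
Variable T : finType.
Variable P : (T -> R) -> (T -> R).
Hypothesis HPadd : forall u v, P (vadd u v) = vadd (P u) (P v).
Hypothesis HPscale : forall a u, P (vscale a u) = vscale a (P u).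
Hypothesis HPsym : forall u v, dot u (P v) = dot v (P u).
Hypothesis HPpos : forall u, 0 <= dot u (P u).

Lemma HPsub u v : P (vsub u v) = vsub (P u) (P v).
Proof.
have -> : vsub u v = vadd u (vscale (-1) v).
  by apply: functional_extensionality => t; rewrite /vsub /vadd /vscale; ring.
rewrite HPadd HPscale; apply: functional_extensionality => t.
rewrite /vsub /vadd /vscale; ring.
Qed.

Notation qP u := (ipP P u u).

Lemma qP_ge0 u : 0 <= qP u.
Proof. exact: HPpos. Qed.

Lemma ipP_sym u v : ipP P u v = ipP P v u.
Proof. by rewrite /ipP HPsym. Qed.

Lemma qP_sub x y : qP (vsub x y) = qP x - 2 * ipP P x y + qP y.
Proof.
rewrite /ipP HPsub dot_vsubl !dot_vsubr (HPsym y x); ring.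
Qed.

Lemma qP_add x y : qP (vadd x y) = qP x + 2 * ipP P x y + qP y.
Proof.
rewrite /ipP HPadd dot_vaddl !dot_vaddr (HPsym y x); ring.
Qed.

Lemma qP_scale a x : qP (vscale a x) = a * a * qP x.
Proof. rewrite /ipP HPscale dot_vscalel dot_vscaler; ring. Qed.

Lemma ipP_scalel a x y : ipP P (vscale a x) y = a * ipP P x y.
Proof. by rewrite /ipP dot_vscalel. Qed.

Lemma ipP_scaler a x y : ipP P x (vscale a y) = a * ipP P x y.
Proof. by rewrite /ipP HPscale dot_vscaler. Qed.

Lemma ipP_subl x y z : ipP P (vsub x y) z = ipP P x z - ipP P y z.
Proof. by rewrite /ipP dot_vsubl. Qed.

Lemma ipP_subr x y z : ipP P z (vsub x y) = ipP P z x - ipP P z y.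
Proof. by rewrite /ipP HPsub dot_vsubr. Qed.

Lemma normP_le a b : qP a <= qP b -> normP P a <= normP P b.
Proof. move=> H; apply: sqrt_le_1_alt; exact: H. Qed.

Lemma normP_sq a : normP P a ^ 2 = qP a.
Proof. by rewrite /normP /= Rmult_1_r sqrt_sqrt //; apply: qP_ge0. Qed.

Lemma avg_of_ineq (alpha : R) (S : (T -> R) -> (T -> R)) :
  0 < alpha < 1 ->
  (forall u v, qP (vsub (S u) (S v)) + (1 - alpha) / alpha *
     qP (vsub (vsub u v) (vsub (S u) (S v))) <= qP (vsub u v)) ->
  averagedP P alpha S.
Proof.
move=> Ha H.
exists (fun w => vadd (vscale (1 - / alpha) w) (vscale (/ alpha) (S w))); split.
- move=> u v; apply: normP_le.
  have -> : vsub (vadd (vscale (1 - / alpha) u) (vscale (/ alpha) (S u)))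
                 (vadd (vscale (1 - / alpha) v) (vscale (/ alpha) (S v)))
     = vadd (vscale (1 - / alpha) (vsub u v)) (vscale (/ alpha) (vsub (S u) (S v))).
    by apply: functional_extensionality => t; rewrite /vsub /vadd /vscale; ring.
  have := H u v.
  rewrite qP_add !qP_scale ipP_scalel ipP_scaler (qP_sub (vsub u v) (vsub (S u) (S v))).
  set X := qP (vsub u v); set Y := qP (vsub (S u) (S v)).
  set Z := ipP P (vsub u v) (vsub (S u) (S v)) => H1.
  have HX : 0 <= X by apply: qP_ge0.
  have H2 : alpha * Y + (1 - alpha) * (X - 2 * Z + Y) <= alpha * X.
    have -> : alpha * Y + (1 - alpha) * (X - 2 * Z + Y) =
      alpha * (Y + (1 - alpha) / alpha * (X - 2 * Z + Y)) by field; lra.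
    apply: Rmult_le_compat_l; lra.
  apply: (Rmult_le_reg_l (alpha * alpha)); first nra.
  have -> : alpha * alpha * ((1 - / alpha) * (1 - / alpha) * X +
     2 * ((1 - / alpha) * (/ alpha * Z)) + / alpha * / alpha * Y)
     = (alpha - 1) * (alpha - 1) * X + 2 * (alpha - 1) * Z + Y by field; lra.
  nra.
- move=> w; apply: functional_extensionality => t; rewrite /vadd /vscale; field; lra.
Qed.

Lemma firm_avg (T1 : (T -> R) -> (T -> R)) :
  (forall a b, qP (vsub (T1 a) (T1 b)) <= ipP P (vsub a b) (vsub (T1 a) (T1 b))) ->
  averagedP P (/ 2) T1.
Proof.
move=> H; apply: avg_of_ineq; first lra.
move=> u v; rewrite (qP_sub (vsub u v) (vsub (T1 u) (T1 v))).
have -> : (1 - / 2) / / 2 = 1 by field.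
have := H u v; lra.
Qed.

Lemma coco_avg (c : R) (Cop : (T -> R) -> (T -> R)) :
  / 2 < c -> cocoerciveP P c Cop ->
  averagedP P (/ (2 * c)) (fun w => vsub w (Cop w)).
Proof.
move=> Hc H; apply: avg_of_ineq.
  split; first by apply: Rinv_0_lt_compat; lra.
  rewrite -Rinv_1; apply: Rinv_lt_contravar; lra.
move=> u v.
have -> : vsub (vsub u (Cop u)) (vsub v (Cop v)) = vsub (vsub u v) (vsub (Cop u) (Cop v)).
  by apply: functional_extensionality => t; rewrite /vsub; ring.
have -> : vsub (vsub u v) (vsub (vsub u v) (vsub (Cop u) (Cop v))) = vsub (Cop u) (Cop v).
  by apply: functional_extensionality => t; rewrite /vsub; ring.
have -> : (1 - / (2 * c)) / / (2 * c) = 2 * c - 1 by field; lra.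
have := H u v; rewrite normP_sq => H1.
rewrite (qP_sub (vsub u v) (vsub (Cop u) (Cop v))).
nra.
Qed.

Lemma kappa_ineq (K2 : R) s t : 0 < K2 ->
  K2 / (1 + K2) * qP (vadd s t) <= K2 * qP s + qP t.
Proof.
move=> HK.
have H := qP_ge0 (vsub (vscale K2 s) t).
rewrite qP_sub qP_scale ipP_scalel in H.
rewrite qP_add.
apply: (Rmult_le_reg_l (1 + K2)); first lra.
have -> : (1 + K2) * (K2 / (1 + K2) * (qP s + 2 * ipP P s t + qP t)) =
  K2 * (qP s + 2 * ipP P s t + qP t) by field; lra.
nra.
Qed.

Lemma comp_avg (c : R) (Cop T1 : (T -> R) -> (T -> R)) :
  / 2 < c -> cocoerciveP P c Cop ->
  (forall a b, qP (vsub (T1 a) (T1 b)) <= ipP P (vsub a b) (vsub (T1 a) (T1 b))) ->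
  averagedP P (2 * c / (4 * c - 1)) (fun w => T1 (vsub w (Cop w))).
Proof.
move=> Hc Hco Hf; apply: avg_of_ineq.
  split; first by apply: Rdiv_lt_0_compat; lra.
  apply: (Rmult_lt_reg_r (4 * c - 1)); first lra.
  have -> : 2 * c / (4 * c - 1) * (4 * c - 1) = 2 * c by field; lra.
  lra.
move=> u v.
set a := vsub u (Cop u); set b := vsub v (Cop v).
set p := vsub (T1 a) (T1 b).
have Hfp : qP p + qP (vsub (vsub a b) p) <= qP (vsub a b).
  rewrite (qP_sub (vsub a b) p); have := Hf a b; rewrite -/p; lra.
have Hab : qP (vsub a b) + (2 * c - 1) * qP (vsub (Cop u) (Cop v)) <= qP (vsub u v).
  have -> : vsub a b = vsub (vsub u v) (vsub (Cop u) (Cop v)).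
    by apply: functional_extensionality => t; rewrite /a /b /vsub; ring.
  have := Hco u v; rewrite normP_sq => H1.
  rewrite (qP_sub (vsub u v) (vsub (Cop u) (Cop v))).
  have := qP_ge0 (vsub (Cop u) (Cop v)); nra.
have Hk := kappa_ineq (2 * c - 1) (vsub (Cop u) (Cop v)) (vsub (vsub a b) p)
  ltac:(lra).
have -> : vsub (vsub u v) p = vadd (vsub (Cop u) (Cop v)) (vsub (vsub a b) p).
  by apply: functional_extensionality => t; rewrite /a /b /vadd /vsub; ring.
have -> : (1 - 2 * c / (4 * c - 1)) / (2 * c / (4 * c - 1)) = (2 * c - 1) / (1 + (2 * c - 1)).
  field; lra.
lra.
Qed.

End Avg.

Set Implicit Arguments.

Lemma rsum_sum (A B : finType) (F : (A + B)%type -> R) :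
  rsum F = rsum (fun a => F (inl a)) + rsum (fun b => F (inr b)).
Proof. by rewrite /rsum big_sumType. Qed.

Lemma rsum_pair (A B : finType) (F : (A * B)%type -> R) :
  rsum F = rsum (fun a => rsum (fun b => F (a, b))).
Proof. by rewrite /rsum pair_bigA; apply: eq_bigr => -[a b]. Qed.

Lemma rsum_sig (I : finType) (J : I -> finType) (F : {i : I & J i} -> R) :
  rsum F = rsum (fun i => rsum (fun j => F (existT _ i j))).
Proof.
rewrite /rsum (sig_big_dep xpredT (fun _ => xpredT) (fun i j => F (existT _ i j))).
by apply: eq_bigr => -[i j].
Qed.

Lemma rsum_exchange (A B : finType) (F : A -> B -> R) :
  rsum (fun a => rsum (fun b => F a b)) = rsum (fun b => rsum (fun a => F a b)).
Proof. by rewrite /rsum exchange_big. Qed.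

Lemma rsum_pred1 (A : finType) (j : A) (F : A -> R) :
  rsum (fun i => if i == j then F i else 0) = F j.
Proof. by rewrite /rsum -big_mkcond big_pred1_eq. Qed.

Lemma rsum_pred1' (A : finType) (j : A) (F : A -> R) :
  rsum (fun i => if j == i then F i else 0) = F j.
Proof.
rewrite -(@rsum_pred1 _ j F); apply: rsum_ext => i; by rewrite eq_sym.
Qed.

Lemma rsum_mulr (A : finType) (F : A -> R) a : rsum F * a = rsum (fun t => F t * a).
Proof. rewrite Rmult_comm -rsum_scale; apply: rsum_ext => t; ring. Qed.

Lemma rsum_mull (A : finType) (F : A -> R) a : a * rsum F = rsum (fun t => a * F t).
Proof. by rewrite rsum_scale. Qed.

Lemma rsum_tn (N : nat) (nd : 'I_N -> nat) (F : Tn nd -> R) :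
  rsum F = rsum (fun i => rsum (fun k : 'I_(nd i) => F (existT _ i k))).
Proof. exact: rsum_sig. Qed.

Unset Implicit Arguments.

Section Game2.
Variables (N M m : nat) (nd : 'I_N -> nat) (src dst : 'I_M -> 'I_N).
Variable Am : forall i : 'I_N, 'I_m -> 'I_(nd i) -> R.

Lemma adjV (l : TNm N m -> R) (z : TMm M m -> R) :
  dot l (Vz src dst z) = dot (VTl src dst l) z.
Proof.
rewrite /dot /Vz /VTl.
transitivity (rsum (fun r : 'I_m => rsum (fun i : 'I_N => rsum (fun e : 'I_M =>
  l (i, r) * Vinc src dst i e * z (e, r))))).
  rewrite rsum_pair rsum_exchange; apply: rsum_ext => r; apply: rsum_ext => i /=.
  rewrite rsum_mull; apply: rsum_ext => e; ring.
rewrite [in RHS]rsum_pair [in RHS]rsum_exchange; apply: rsum_ext => r.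
rewrite rsum_exchange; apply: rsum_ext => e /=.
rewrite rsum_mulr; apply: rsum_ext => i; ring.
Qed.

Lemma adjR (x : TNn nd -> R) (y : Tn nd -> R) :
  dot x (RselT y) = dot (Rsel x) y.
Proof.
rewrite /dot /RselT /Rsel rsum_pair rsum_exchange; apply: rsum_ext => t /=.
rewrite -(@rsum_pred1' _ (tag t) (fun i => x (i, t) * y t)).
apply: rsum_ext => i; rewrite (fun_if (Rmult (x (i, t)))) Rmult_0_r; reflexivity.
Qed.

Lemma adjA (l : TNm N m -> R) (y : Tn nd -> R) :
  dot l (Aop Am y) = dot (AopT Am l) y.
Proof.
rewrite /dot /Aop rsum_pair [in RHS]rsum_tn; apply: rsum_ext => i /=.
symmetry.
rewrite (rsum_ext _ (fun k => rsum (fun r => Am i r k * l (i, r) * y (existT (fun i0 : 'I_N => 'I_(nd i0)) i k))));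
  last by move=> k; rewrite rsum_mulr.
rewrite rsum_exchange; apply: rsum_ext => r.
rewrite rsum_mull; apply: rsum_ext => k; rewrite -Rmult_assoc (Rmult_comm (l (i, r)) (Am i r k)); reflexivity.
Qed.

Lemma Vz_add (z z' : TMm M m -> R) : Vz src dst (vadd z z') = vadd (Vz src dst z) (Vz src dst z').
Proof. apply: functional_extensionality => p; rewrite /Vz /vadd -rsum_add; apply: rsum_ext => e; ring. Qed.
Lemma Vz_sub (z z' : TMm M m -> R) : Vz src dst (vsub z z') = vsub (Vz src dst z) (Vz src dst z').
Proof. apply: functional_extensionality => p; rewrite /Vz /vsub -rsum_sub; apply: rsum_ext => e; ring. Qed.
Lemma Vz_scale a (z : TMm M m -> R) : Vz src dst (vscale a z) = vscale a (Vz src dst z).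
Proof. apply: functional_extensionality => p; rewrite /Vz /vscale -rsum_scale; apply: rsum_ext => e; ring. Qed.

Lemma VTl_add (z z' : TNm N m -> R) : VTl src dst (vadd z z') = vadd (VTl src dst z) (VTl src dst z').
Proof. apply: functional_extensionality => p; rewrite /VTl /vadd -rsum_add; apply: rsum_ext => e; ring. Qed.
Lemma VTl_sub (z z' : TNm N m -> R) : VTl src dst (vsub z z') = vsub (VTl src dst z) (VTl src dst z').
Proof. apply: functional_extensionality => p; rewrite /VTl /vsub -rsum_sub; apply: rsum_ext => e; ring. Qed.
Lemma VTl_scale a (z : TNm N m -> R) : VTl src dst (vscale a z) = vscale a (VTl src dst z).
Proof. apply: functional_extensionality => p; rewrite /VTl /vscale -rsum_scale; apply: rsum_ext => e; ring. Qed.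

Lemma Aop_add (z z' : Tn nd -> R) : Aop Am (vadd z z') = vadd (Aop Am z) (Aop Am z').
Proof. apply: functional_extensionality => p; rewrite /Aop /vadd -rsum_add; apply: rsum_ext => e; ring. Qed.
Lemma Aop_sub (z z' : Tn nd -> R) : Aop Am (vsub z z') = vsub (Aop Am z) (Aop Am z').
Proof. apply: functional_extensionality => p; rewrite /Aop /vsub -rsum_sub; apply: rsum_ext => e; ring. Qed.
Lemma Aop_scale a (z : Tn nd -> R) : Aop Am (vscale a z) = vscale a (Aop Am z).
Proof. apply: functional_extensionality => p; rewrite /Aop /vscale -rsum_scale; apply: rsum_ext => e; ring. Qed.

Lemma AopT_add (z z' : TNm N m -> R) : AopT Am (vadd z z') = vadd (AopT Am z) (AopT Am z').
Proof. apply: functional_extensionality => -[i k]; rewrite /AopT /vadd -rsum_add; apply: rsum_ext => e; ring. Qed.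
Lemma AopT_sub (z z' : TNm N m -> R) : AopT Am (vsub z z') = vsub (AopT Am z) (AopT Am z').
Proof. apply: functional_extensionality => -[i k]; rewrite /AopT /vsub -rsum_sub; apply: rsum_ext => e; ring. Qed.
Lemma AopT_scale a (z : TNm N m -> R) : AopT Am (vscale a z) = vscale a (AopT Am z).
Proof. apply: functional_extensionality => -[i k]; rewrite /AopT /vscale -rsum_scale; apply: rsum_ext => e; ring. Qed.

Lemma RselT_add (z z' : Tn nd -> R) : RselT (vadd z z') = vadd (RselT z) (RselT z').
Proof. apply: functional_extensionality => p; rewrite /RselT /vadd; case: ifP => _; ring. Qed.
Lemma RselT_sub (z z' : Tn nd -> R) : RselT (vsub z z') = vsub (RselT z) (RselT z').
Proof. apply: functional_extensionality => p; rewrite /RselT /vsub; case: ifP => _; ring. Qed.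
Lemma RselT_scale a (z : Tn nd -> R) : RselT (vscale a z) = vscale a (RselT z).
Proof. apply: functional_extensionality => p; rewrite /RselT /vscale; case: ifP => _; ring. Qed.

Lemma Rsel_add (z z' : TNn nd -> R) : Rsel (vadd z z') = vadd (Rsel z) (Rsel z').
Proof. by []. Qed.
Lemma Rsel_sub (z z' : TNn nd -> R) : Rsel (vsub z z') = vsub (Rsel z) (Rsel z').
Proof. by []. Qed.
Lemma Rsel_scale a (z : TNn nd -> R) : Rsel (vscale a z) = vscale a (Rsel z).
Proof. by []. Qed.

Lemma Lx_add (z z' : TNn nd -> R) : Lx src dst (vadd z z') = vadd (Lx src dst z) (Lx src dst z').
Proof. apply: functional_extensionality => p; rewrite /Lx /vadd -rsum_add; apply: rsum_ext => e; ring. Qed.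
Lemma Lx_sub (z z' : TNn nd -> R) : Lx src dst (vsub z z') = vsub (Lx src dst z) (Lx src dst z').
Proof. apply: functional_extensionality => p; rewrite /Lx /vsub -rsum_sub; apply: rsum_ext => e; ring. Qed.

Lemma RselK (y : Tn nd -> R) : Rsel (RselT y) = y.
Proof. apply: functional_extensionality => t; by rewrite /Rsel /RselT /= eqxx. Qed.


Lemma dot_TW (u v : TW M m nd -> R) :
  dot u v = dot (Wl u) (Wl v) + dot (Wz u) (Wz v) + dot (Wx u) (Wx v).
Proof. by rewrite /dot !rsum_sum. Qed.

End Game2.
Arguments adjV {N M m src dst} l z.
Arguments adjA {N m nd Am} l y.
Arguments adjR {N nd} x y.

Section Game3.
Variables (N M m : nat) (nd : 'I_N -> nat) (src dst : 'I_M -> 'I_N).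
Variable Am : forall i : 'I_N, 'I_m -> 'I_(nd i) -> R.
Variables (sigma gamma tau : R).

Lemma Wl_add (u v : TW M m nd -> R) : Wl (vadd u v) = vadd (Wl u) (Wl v). Proof. by []. Qed.
Lemma Wz_add (u v : TW M m nd -> R) : Wz (vadd u v) = vadd (Wz u) (Wz v). Proof. by []. Qed.
Lemma Wx_add (u v : TW M m nd -> R) : Wx (vadd u v) = vadd (Wx u) (Wx v). Proof. by []. Qed.
Lemma Wl_sub (u v : TW M m nd -> R) : Wl (vsub u v) = vsub (Wl u) (Wl v). Proof. by []. Qed.
Lemma Wz_sub (u v : TW M m nd -> R) : Wz (vsub u v) = vsub (Wz u) (Wz v). Proof. by []. Qed.
Lemma Wx_sub (u v : TW M m nd -> R) : Wx (vsub u v) = vsub (Wx u) (Wx v). Proof. by []. Qed.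
Lemma Wl_scale a (u : TW M m nd -> R) : Wl (vscale a u) = vscale a (Wl u). Proof. by []. Qed.
Lemma Wz_scale a (u : TW M m nd -> R) : Wz (vscale a u) = vscale a (Wz u). Proof. by []. Qed.
Lemma Wx_scale a (u : TW M m nd -> R) : Wx (vscale a u) = vscale a (Wx u). Proof. by []. Qed.
Lemma Wl_mkW l z x : Wl (mkW (M:=M) (m:=m) (nd:=nd) l z x) = l. Proof. by []. Qed.
Lemma Wz_mkW l z x : Wz (mkW (M:=M) (m:=m) (nd:=nd) l z x) = z. Proof. by []. Qed.
Lemma Wx_mkW l z x : Wx (mkW (M:=M) (m:=m) (nd:=nd) l z x) = x. Proof. by []. Qed.

Notation Phi := (PhiApp src dst Am sigma gamma tau).

Lemma Phi_add u v : Phi (vadd u v) = vadd (Phi u) (Phi v).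
Proof.
rewrite /PhiApp !Wl_add !Wz_add !Wx_add Rsel_add Vz_add Aop_add VTl_add AopT_add RselT_add.
apply: functional_extensionality => -[[t|t]|t]; rewrite /mkW /vadd /vscale /=; ring.
Qed.

Lemma Phi_scale a u : Phi (vscale a u) = vscale a (Phi u).
Proof.
rewrite /PhiApp !Wl_scale !Wz_scale !Wx_scale Rsel_scale Vz_scale Aop_scale VTl_scale
  AopT_scale RselT_scale.
apply: functional_extensionality => -[[t|t]|t]; rewrite /mkW /vadd /vscale /=; ring.
Qed.

Lemma Phi_sub u v : Phi (vsub u v) = vsub (Phi u) (Phi v).
Proof.
rewrite /PhiApp !Wl_sub !Wz_sub !Wx_sub Rsel_sub Vz_sub Aop_sub VTl_sub AopT_sub RselT_sub.
apply: functional_extensionality => -[[t|t]|t]; rewrite /mkW /vadd /vsub /vscale /=; ring.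
Qed.

Lemma Phi_sym u v : dot u (Phi v) = dot v (Phi u).
Proof.
rewrite !dot_TW /PhiApp !Wl_mkW !Wz_mkW !Wx_mkW.
rewrite !dot_vaddr !dot_vscaler.
rewrite (adjV (Wl u) (Wz v)) (adjV (Wl v) (Wz u)) (adjA (Wl u) (Rsel (Wx v)))
  (adjA (Wl v) (Rsel (Wx u))).
rewrite (dot_sym (AopT Am (Wl u))) (dot_sym (AopT Am (Wl v))) -!adjR.
rewrite (dot_sym (VTl src dst (Wl u))) (dot_sym (VTl src dst (Wl v))).
rewrite (dot_sym (Wl v) (Wl u)) (dot_sym (Wz v) (Wz u)) (dot_sym (Wx v) (Wx u)).
ring.
Qed.

End Game3.

Section Game4.
Variables (N M m : nat) (nd : 'I_N -> nat) (src dst : 'I_M -> 'I_N).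
Variable Om : forall i : 'I_N, ('I_(nd i) -> R) -> Prop.
Variable Am : forall i : 'I_N, 'I_m -> 'I_(nd i) -> R.

Lemma A_mono (P P' Y Y' : TW M m nd -> R) :
  frakA src dst Om Am P Y -> frakA src dst Om Am P' Y' -> 0 <= dot (vsub P P') (vsub Y Y').
Proof.
move=> [v [[Hin Hv] ->]] [v' [[Hin' Hv'] ->]].
have H1 := Hv _ Hin'. have H2 := Hv' _ Hin.
rewrite dot_vsubr in H1; rewrite dot_vsubr in H2.
rewrite dot_TW !Wl_sub !Wz_sub !Wx_sub !Wl_mkW !Wz_mkW !Wx_mkW.
rewrite !dot_vsubl !dot_vsubr !dot_vaddr !dot_vscaler.
rewrite !adjR !adjV !adjA.
repeat match goal with |- context [dot (VTl ?a ?b ?c) ?d] => rewrite (dot_sym (VTl a b c) d) end.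
repeat match goal with |- context [dot (AopT ?a ?c) ?d] => rewrite (dot_sym (AopT a c) d) end.
rewrite !(dot_sym v) in H1; rewrite !(dot_sym v') in H2.
lra.
Qed.
End Game4.

Lemma wcs (I : finType) (p x : I -> R) : (forall l, 0 <= p l) ->
  (rsum (fun l => p l * x l)) ^ 2 <= rsum p * rsum (fun l => p l * (x l * x l)).
Proof.
move=> Hp.
have Hs := rsum_ge0 p Hp.
case: (Req_dec (rsum p) 0) => Hz.
  have H0 := rsum_eq0 p Hp Hz.
  rewrite (rsum_ext (fun l => p l * x l) (fun _ => 0)); last by move=> l; rewrite H0; ring.
  rewrite rsum_zero Hz; lra.
set Sp := rsum p in Hs Hz *.
set Sx := rsum (fun l => p l * x l).
set Sxx := rsum (fun l => p l * (x l * x l)).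
set mu := Sx / Sp.
have H : 0 <= rsum (fun l => p l * ((x l - mu) * (x l - mu))).
  apply: rsum_ge0 => l; apply: Rmult_le_pos; [exact: Hp | exact: Rle_0_sqr].
rewrite (rsum_ext _ (fun l => p l * (x l * x l) + ((-2 * mu) * (p l * x l) + (mu * mu) * p l)))
  in H; last by move=> l; ring.
rewrite !rsum_add !rsum_scale -/Sxx -/Sx -/Sp in H.
have HSp : 0 < Sp by lra.
have Hmu : mu * Sp = Sx by rewrite /mu; field.
nra.
Qed.

Lemma bigmax_ge (I : finType) (F : I -> R) j : F j <= \big[Rmax/0]_(i : I) F i.
Proof.
have : j \in index_enum I by rewrite mem_index_enum.
elim: (index_enum I) => [//|a r IH].
rewrite in_cons big_cons => /orP [/eqP ->|Hj]; first exact: Rmax_l.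
apply: Rle_trans (IH Hj) _; exact: Rmax_r.
Qed.

Section Graph.
Variables (N M : nat) (src dst : 'I_M -> 'I_N).
Hypothesis Hsd : forall l, src l <> dst l.

Lemma Vinc_cube i l : Vinc src dst i l * (Vinc src dst i l * Vinc src dst i l) = Vinc src dst i l.
Proof. rewrite /Vinc; case: ifP => _; [ring | case: ifP => _; ring]. Qed.

Lemma Vinc_sq i l : Vinc src dst i l * Vinc src dst i l =
  (if dst l == i then 1 else 0) + (if src l == i then 1 else 0).
Proof.
rewrite /Vinc; case E1: (dst l == i); case E2: (src l == i); try ring.
exfalso; apply: (Hsd l); by rewrite (eqP E1) (eqP E2).
Qed.

Lemma Vinc_sq_sum l : rsum (fun i => Vinc src dst i l * Vinc src dst i l) = 2.
Proof.
rewrite (rsum_ext _ _ (Vinc_sq^~ l)) rsum_add.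
rewrite (@rsum_pred1' _ (dst l) (fun _ => 1)) (@rsum_pred1' _ (src l) (fun _ => 1)); ring.
Qed.

Lemma dstar_ge0 : 0 <= dstar src dst.
Proof.
rewrite /dstar; apply: (big_ind (fun x => 0 <= x)); first lra.
- move=> x y Hx Hy; apply: Rle_trans Hx (Rmax_l _ _).
- move=> i _; apply: rsum_ge0 => l; exact: Rle_0_sqr.
Qed.

Lemma lap_bound (w : 'I_M -> R) :
  rsum (fun i => (rsum (fun l => Vinc src dst i l * w l)) ^ 2)
    <= 2 * dstar src dst * rsum (fun l => w l * w l).
Proof.
apply: Rle_trans (rsum_le _ (fun i => dstar src dst *
   rsum (fun l => Vinc src dst i l * Vinc src dst i l * (w l * w l))) _) _.
  move=> i.
  have H := wcs _ (fun l => Vinc src dst i l * Vinc src dst i l)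
     (fun l => Vinc src dst i l * w l) (fun l => Rle_0_sqr _).
  rewrite (rsum_ext (fun l => _ * _ * (Vinc src dst i l * w l)) (fun l => Vinc src dst i l * w l))
    in H; last by move=> l; have Hc := Vinc_cube i l; transitivity ((Vinc src dst i l * (Vinc src dst i l * Vinc src dst i l)) * w l); [ring | by rewrite Hc].
  rewrite (rsum_ext (fun l => _ * _ * ((Vinc src dst i l * w l) * (Vinc src dst i l * w l)))
     (fun l => Vinc src dst i l * Vinc src dst i l * (w l * w l))) in H; last first.
    move=> l; have := Vinc_cube i l; move=> Hc.
    have -> : Vinc src dst i l * Vinc src dst i l * (Vinc src dst i l * w l * (Vinc src dst i l * w l))
      = (Vinc src dst i l * (Vinc src dst i l * Vinc src dst i l)) * Vinc src dst i l * (w l * w l)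
      by ring.
    by rewrite Hc.
  apply: Rle_trans H _.
  apply: Rmult_le_compat_r.
    apply: rsum_ge0 => l; apply: Rmult_le_pos; exact: Rle_0_sqr.
  exact: (bigmax_ge _ (fun i => Lap src dst i i) i).
rewrite (rsum_ext (fun i => dstar src dst * rsum _) (fun i => rsum (fun l =>
   dstar src dst * (w l * w l) * (Vinc src dst i l * Vinc src dst i l)))); last first.
  by move=> i; rewrite rsum_mull; apply: rsum_ext => l; ring.
rewrite rsum_exchange -rsum_scale; apply: rsum_le => l.
rewrite rsum_scale Vinc_sq_sum; apply: Req_le; ring.
Qed.

End Graph.

Section Lap2.
Variables (N M : nat) (nd : 'I_N -> nat) (src dst : 'I_M -> 'I_N).
Hypothesis Hsd : forall l, src l <> dst l.

Definition wv (x : TNn nd -> R) (t : Tn nd) (l : 'I_M) : R :=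
  rsum (fun j => Vinc src dst j l * x (j, t)).

Lemma Lx_eq x i t : Lx src dst x (i, t) = rsum (fun l => Vinc src dst i l * wv x t l).
Proof.
rewrite /Lx /Lap /wv /=.
rewrite (rsum_ext _ (fun j => rsum (fun l => Vinc src dst i l * (Vinc src dst j l * x (j, t)))));
  last first.
  move=> j; rewrite rsum_mulr; apply: rsum_ext => l; by rewrite Rmult_assoc.
rewrite rsum_exchange; apply: rsum_ext => l; by rewrite rsum_mull.
Qed.

Lemma dotLx x : dot x (Lx src dst x) = rsum (fun t => rsum (fun l => wv x t l * wv x t l)).
Proof.
rewrite /dot rsum_pair rsum_exchange; apply: rsum_ext => t /=.
rewrite (rsum_ext _ (fun i => rsum (fun l => wv x t l * (Vinc src dst i l * x (i, t)))));
  last by move=> i; rewrite Lx_eq rsum_mull; apply: rsum_ext => l; set a := x _; set b := wv _ _ _; ring.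
rewrite rsum_exchange; apply: rsum_ext => l; by rewrite rsum_mull.
Qed.

Lemma dotLx_ge0 (x : TNn nd -> R) : 0 <= dot x (Lx src dst x).
Proof. rewrite dotLx; apply: rsum_ge0 => t; apply: rsum_ge0 => l; exact: Rle_0_sqr. Qed.

Lemma dotLxLx (x : TNn nd -> R) : dot (Lx src dst x) (Lx src dst x) <= 2 * dstar src dst * dot x (Lx src dst x).
Proof.
rewrite dotLx -rsum_scale /dot rsum_pair rsum_exchange; apply: rsum_le => t /=.
apply: (Rle_trans _ _ _ _ (@lap_bound N M src dst Hsd (wv x t))).
apply: Req_le; apply: rsum_ext => i; rewrite Lx_eq /=; ring.
Qed.

End Lap2.

Section BC.
Variables (N M m : nat) (nd : 'I_N -> nat) (src dst : 'I_M -> 'I_N).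
Variable Am : forall i : 'I_N, 'I_m -> 'I_(nd i) -> R.
Variable bv : 'I_N -> 'I_m -> R.
Variable gradf : forall i : 'I_N, (Tn nd -> R) -> ('I_(nd i) -> R).
Hypothesis Hsd : forall l, src l <> dst l.
Variables chi beta : R.
Hypothesis HA4 : forall x x' : TNn nd -> R,
     chi * (vnorm (vsub (Fvec gradf x) (Fvec gradf x'))) ^ 2
       <= dot (vsub x x') (vsub (RselT (Fvec gradf x)) (RselT (Fvec gradf x'))).
Hypothesis Hbeta : 0 < beta.
Hypothesis Hb1 : 2 * beta < chi.
Hypothesis Hb2 : 4 * beta * dstar src dst < 1.

Lemma B_coco (W W' : TW M m nd -> R) :
  beta * dot (vsub (frakB src dst Am bv gradf W) (frakB src dst Am bv gradf W'))
             (vsub (frakB src dst Am bv gradf W) (frakB src dst Am bv gradf W'))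
  <= dot (vsub W W') (vsub (frakB src dst Am bv gradf W) (frakB src dst Am bv gradf W')).
Proof.
set e := vsub _ _.
set x := Wx W; set x' := Wx W'.
set dF := vsub (Fvec gradf x) (Fvec gradf x').
set D := vsub x x'.
have Hl : Wl e = vsub (bvec bv) (bvec bv) by [].
have Hz : Wz e = vsub vzero vzero by [].
have Hx : Wx e = vadd (RselT dF) (Lx src dst D).
  rewrite /e Wx_sub /frakB !Wx_mkW /dF /D RselT_sub Lx_sub -/x -/x'.
  apply: functional_extensionality => p; rewrite /vadd /vsub; ring.
rewrite !dot_TW Hl Hz Hx Wx_sub -/x -/x' -/D.
have Z1 : forall (T : finType) (u c : T -> R), dot u (vsub c c) = 0.
  by move=> T u c; rewrite dot_vsubr; ring.
rewrite !Z1.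
set a := RselT dF; set b := Lx src dst D.
rewrite (dot_vaddr a b D) (dot_vaddl a b (vadd a b)) (dot_vaddr a b a) (dot_vaddr a b b).
have H4 := HA4 x x'.
rewrite -/dF -RselT_sub -/a /vnorm pow2_sqrt in H4; last exact: dot_ge0.
have Haa : dot a a = dot dF dF by rewrite /a adjR RselK.
have Hab := dot_ge0 (vsub a b).
rewrite !dot_vsubl !dot_vsubr (dot_sym b a) in Hab.
rewrite (dot_sym b a).
have HQ := @dotLx_ge0 N M nd src dst D.
have Hbb := @dotLxLx N M nd src dst Hsd D.
rewrite -/b in HQ Hbb.
have HdF := dot_ge0 dF.
have Hd := @dstar_ge0 N M src dst.
have P1 : 0 <= beta * (dot a a - 2 * dot a b + dot b b) by apply: Rmult_le_pos; lra.
have P2 : beta * dot b b <= beta * (2 * dstar src dst * dot D b) by apply: Rmult_le_compat_l; lra.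
have P3 : 0 <= (chi - 2 * beta) * dot dF dF by apply: Rmult_le_pos; lra.
have P4 : 0 <= (1 - 4 * beta * dstar src dst) * dot D b by apply: Rmult_le_pos; lra.
rewrite -/D in H4; rewrite Haa in P1 *; nra.
Qed.
End BC.

Lemma blk_le (N : nat) (nd : 'I_N -> nat) (u : Tn nd -> R) (i : 'I_N) :
  dot (fun k : 'I_(nd i) => u (existT _ i k)) (fun k => u (existT _ i k)) <= dot u u.
Proof.
rewrite [in X in _ <= X]/dot rsum_tn.
apply: (rsum_term (fun j => rsum (fun k : 'I_(nd j) => u (existT _ j k) * u (existT _ j k))) i).
move=> j; apply: rsum_ge0 => k; exact: Rle_0_sqr.
Qed.

Lemma Omega_closed (N : nat) (nd : 'I_N -> nat) (Om : forall i : 'I_N, ('I_(nd i) -> R) -> Prop) :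
  (forall i, closed_vset (Om i)) -> closed_vset (OmegaP Om).
Proof.
move=> Hc x Hx.
have [i Hi] := not_all_ex_not _ _ Hx.
have [eps [Heps Hb]] := Hc i _ Hi.
exists eps; split => // y Hy Hyin.
apply: (Hb (fun k => y (existT _ i k))); last exact: Hyin i.
apply: Rle_lt_trans Hy; apply: sqrt_le_1_alt.
exact: (blk_le _ _ (vsub y x) i).
Qed.

Lemma Omega_convex (N : nat) (nd : 'I_N -> nat) (Om : forall i : 'I_N, ('I_(nd i) -> R) -> Prop) :
  (forall i, convex_vset (Om i)) -> convex_vset (OmegaP Om).
Proof. move=> Hc x y t Hx Hy Ht i; exact: (Hc i _ _ t (Hx i) (Hy i) Ht). Qed.

Lemma Omega_ne (N : nat) (nd : 'I_N -> nat) (Om : forall i : 'I_N, ('I_(nd i) -> R) -> Prop) :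
  (forall i, has_nonempty_interior (Om i)) -> exists y, OmegaP Om y.
Proof.
move=> Hi.
have Hp : forall i, exists x, Om i x.
  move=> i; have [x [eps [He Hb]]] := Hi i; exists x; apply: Hb.
  rewrite /vnorm.
  have -> : dot (vsub x x) (vsub x x) = 0.
    rewrite /dot (rsum_ext _ (fun _ => 0)); first exact: rsum_zero.
    move=> t; rewrite /vsub; ring.
  by rewrite sqrt_0.
pose pick i := proj1_sig (constructive_indefinite_description _ (Hp i)).
exists (fun t : Tn nd => let: existT i k := t in pick i k) => i /=.
exact: (proj2_sig (constructive_indefinite_description _ (Hp i))).
Qed.
Theorem lemma4 (N M m : nat) (nd : 'I_N -> nat) (src dst : 'I_M -> 'I_N)
  (Om : forall i : 'I_N, ('I_(nd i) -> R) -> Prop)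
  (Am : forall i : 'I_N, 'I_m -> 'I_(nd i) -> R) (bv : 'I_N -> 'I_m -> R)
  (f : 'I_N -> (Tn nd -> R) -> R)
  (gradf : forall i : 'I_N, (Tn nd -> R) -> ('I_(nd i) -> R))
  (chi betaE delta sigma gamma tau : R)
  (* the communication graph *)
  (Hgraph : connected_simple_graph src dst)
  (* Assumption 1 *)
  (HOm_closed : forall i, closed_vset (Om i))
  (HOm_convex : forall i, convex_vset (Om i))
  (HOm_int : forall i, has_nonempty_interior (Om i))
  (HX_ri : nonempty_rel_interior (Xset Om Am bv))
  (HXi_ri : forall (i : 'I_N) (x : Tn nd -> R), Xset Om Am bv x ->
     nonempty_rel_interior (fun u => Om i u /\ Xset Om Am bv (upd x i u)))
  (Hf_convex : forall (i : 'I_N) (x : Tn nd -> R) (u v : 'I_(nd i) -> R) (t : R),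
     0 <= t <= 1 ->
     f i (upd x i (vadd (vscale t u) (vscale (1 - t) v)))
       <= t * f i (upd x i u) + (1 - t) * f i (upd x i v))
  (* f_i is C^1 in x_i, with partial gradient gradf i *)
  (Hgrad : forall (i : 'I_N) (x : Tn nd -> R) (eps : R), 0 < eps ->
     exists del, 0 < del /\ forall h : 'I_(nd i) -> R, vnorm h < del ->
       Rabs (f i (upd x i (vadd (blk x i) h)) - f i x - dot (gradf i x) h)
         <= eps * vnorm h)
  (Hgrad_cont : forall (i : 'I_N) (x : Tn nd -> R) (eps : R), 0 < eps ->
     exists del, 0 < del /\ forall u : 'I_(nd i) -> R,
       vnorm (vsub u (blk x i)) < del ->
       vnorm (vsub (gradf i (upd x i u)) (gradf i x)) < eps)
  (* Assumption 4 *)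
  (Hchi : 0 < chi)
  (HA4 : forall x x' : TNn nd -> R,
     chi * (vnorm (vsub (Fvec gradf x) (Fvec gradf x'))) ^ 2
       <= dot (vsub x x') (vsub (RselT (Fvec gradf x)) (RselT (Fvec gradf x'))))
  (* step sizes: betaE in (0, 1/2 min{chi, 1/(2 dstar)}), delta > 1/(2 betaE) *)
  (HbetaE : 0 < betaE) (HbetaE1 : 2 * betaE < chi)
  (HbetaE2 : 4 * betaE * dstar src dst < 1)
  (Hdelta : / (2 * betaE) < delta)
  (Hsigma : 0 < sigma) (Hgamma : 0 < gamma) (Htau : 0 < tau)
  (* bar Phi - delta I is positive semidefinite *)
  (HPSD : forall W : TW M m nd -> R,
     0 <= dot W (PhiApp src dst Am sigma gamma tau W) - delta * dot W W) :
  let Phi := PhiApp src dst Am sigma gamma tau in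
  let A := frakA src dst Om Am in
  let B := frakB src dst Am bv gradf in
  (exists Psi, is_inverse Phi Psi) /\
  forall Psi, is_inverse Phi Psi ->
    (* (i) *)
    max_monotoneP Phi (fun W U => exists Y, A W Y /\ U = Psi Y) /\
    (exists T1 : (TW M m nd -> R) -> (TW M m nd -> R),
       (* T1 = (Id + Phi^-1 A)^-1 is single-valued, everywhere defined *)
       (forall W P, (exists Y, A P Y /\ W = vadd P (Psi Y)) <-> P = T1 W) /\
       averagedP Phi (/ 2) T1 /\
       (* (iii) T = T1 o T2 *)
       averagedP Phi (2 * delta * betaE / (4 * delta * betaE - 1))
         (fun W => T1 (vsub W (Psi (B W))))) /\
    (* (ii) *)
    cocoerciveP Phi (delta * betaE) (fun W => Psi (B W)) /\
    averagedP Phi (/ (2 * delta * betaE)) (fun W => vsub W (Psi (B W))).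
Proof.
move=> Phi A B.
have Hsd : forall l, src l <> dst l by case: Hgraph => _ [H _].
have Hdelta0 : 0 < delta.
  have : 0 < / (2 * betaE) by apply: Rinv_0_lt_compat; lra.
  lra.
have HPadd : forall u v, Phi (vadd u v) = vadd (Phi u) (Phi v) :=
  @Phi_add N M m nd src dst Am sigma gamma tau.
have HPscale : forall a u, Phi (vscale a u) = vscale a (Phi u) :=
  @Phi_scale N M m nd src dst Am sigma gamma tau.
have HPsub : forall u v, Phi (vsub u v) = vsub (Phi u) (Phi v) :=
  @Phi_sub N M m nd src dst Am sigma gamma tau.
have HPsym : forall u v, dot u (Phi v) = dot v (Phi u) :=
  @Phi_sym N M m nd src dst Am sigma gamma tau.
have HPpos : forall u, delta * dot u u <= dot u (Phi u).
  move=> u; have := HPSD u; rewrite /Phi; lra.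
have HPpos0 : forall u, 0 <= dot u (Phi u).
  move=> u; have := HPpos u; have := dot_ge0 u; nra.
have Phi_inj : forall a b, Phi a = Phi b -> a = b.
  move=> a b Hab.
  have Hd : Phi (vsub a b) = vzero.
    rewrite HPsub Hab; apply: functional_extensionality => t; rewrite /vsub /vzero; ring.
  have := HPpos (vsub a b); rewrite Hd dot_zeror => H.
  have H0 := dot_ge0 (vsub a b).
  have : dot (vsub a b) (vsub a b) = 0 by nra.
  move/dot_eq0 => Hz; apply: functional_extensionality => t.
  have := equal_f Hz t; rewrite /vsub /vzero; lra.
have Phi_surj : forall c, exists y, Phi y = c.
  move=> c.
  have Hcl : closed_vset (fun _ : TW M m nd -> R => True) by move=> x Hx; exfalso; exact: Hx I.
  have Hcv : convex_vset (fun _ : TW M m nd -> R => True) by [].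
  have [y [_ Hy]] := quad_min _ (fun _ => True) Phi c delta Hdelta0 Hcl Hcv
    (ex_intro _ vzero I) HPadd HPscale HPsym HPpos.
  set g := vsub (Phi y) c in Hy.
  have := Hy (vsub y g) I.
  have -> : vsub (vsub y g) y = vscale (-1) g.
    by apply: functional_extensionality => t; rewrite /vsub /vscale; ring.
  rewrite dot_vscaler => H.
  have Hgg := dot_ge0 g.
  have : dot g g = 0 by lra.
  move/dot_eq0 => Hg0; exists y; apply: functional_extensionality => t.
  have := equal_f Hg0 t; rewrite /g /vsub /vzero; lra.
split.
  exists (fun c => proj1_sig (constructive_indefinite_description _ (Phi_surj c))).
  split => w; first exact: (proj2_sig (constructive_indefinite_description _ (Phi_surj w))).
  apply: Phi_inj; exact: (proj2_sig (constructive_indefinite_description _ (Phi_surj (Phi w)))).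
move=> Psi [HPsi1 HPsi2].
have HPhiPsi : forall Y Y', Phi (vsub (Psi Y) (Psi Y')) = vsub Y Y'.
  by move=> Y Y'; rewrite HPsub !HPsi1.
have HPhiadd : forall P Y, Phi (vadd P (Psi Y)) = vadd (Phi P) Y.
  by move=> P Y; rewrite HPadd HPsi1.
have Amono : forall P P' Y Y', A P Y -> A P' Y' -> 0 <= dot (vsub P P') (vsub Y Y') :=
  @A_mono N M m nd src dst Om Am.
have Hres : forall W, exists P Y, A P Y /\ W = vadd P (Psi Y).
  move=> W.
  have [c Hc] : exists c, c = Phi W by exists (Phi W).
  set lam := vscale sigma (Wl c).
  set zz := vscale gamma (vsub (Wz c) (vscale 2 (VTl src dst lam))).
  set g := vsub (Wx c) (vscale 2 (RselT (AopT Am lam))).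
  have [y [Hy Hproj]] := quad_min _ (OmegaP Om) (fun u => u) (vscale tau (Rsel g)) 1 Rlt_0_1
    (@Omega_closed N nd Om HOm_closed) (@Omega_convex N nd Om HOm_convex) (@Omega_ne N nd Om HOm_int)
    (fun u v => erefl) (fun a u => erefl) (fun u v => dot_sym u v)
    (fun u => Req_le _ _ (Rmult_1_l _)).
  set v := vscale (/ tau) (vsub (vscale tau (Rsel g)) y).
  set xx := vscale tau (vsub g (RselT v)).
  have HR : Rsel xx = y.
    apply: functional_extensionality => t.
    rewrite /xx /v /Rsel /vscale /vsub /RselT /= eqxx; field; lra.
  exists (mkW lam zz xx), (vsub c (Phi (mkW lam zz xx))).
  split.
    exists v; split.
      rewrite Wx_mkW HR; split => // y' Hy'.
      have := Hproj y' Hy'.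
      rewrite /v dot_vscalel !dot_vsubl => H.
      have Ht : 0 < / tau by apply: Rinv_0_lt_compat.
      nra.
    rewrite Wz_mkW Wx_mkW Wl_mkW HR.
    apply: functional_extensionality => -[[t|t]|t];
      rewrite /Phi /PhiApp Wl_mkW Wz_mkW Wx_mkW HR /mkW /vsub /vadd /vscale /=.
    - rewrite /lam /vscale /Wl -Rmult_assoc Rinv_l; last lra. set a0 := c _; ring.
    - rewrite /zz /lam /vscale /vsub /Wz; set a0 := c _; set a1 := VTl _ _ _ _; field; lra.
    - rewrite /xx /g /vscale /vsub /Wx; set a0 := c _; field; lra.
  apply: Phi_inj; rewrite HPhiadd -Hc.
  apply: functional_extensionality => s; rewrite /vadd /vsub; ring.
have Huniq : forall P P' Y Y', A P Y -> A P' Y' -> vadd P (Psi Y) = vadd P' (Psi Y') -> P = P'.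
  move=> P P' Y Y' HA HA' He.
  have H1 := Amono _ _ _ _ HA HA'.
  have HY : vsub Y Y' = vscale (-1) (Phi (vsub P P')).
    have := f_equal Phi He; rewrite !HPhiadd => HE.
    rewrite HPsub; apply: functional_extensionality => t.
    have := equal_f HE t; rewrite /vadd /vsub /vscale; lra.
  rewrite HY dot_vscaler in H1.
  have H2 := HPpos (vsub P P'); have H0 := dot_ge0 (vsub P P').
  have : dot (vsub P P') (vsub P P') = 0 by nra.
  move/dot_eq0 => Hz; apply: functional_extensionality => t.
  have := equal_f Hz t; rewrite /vsub /vzero; lra.
pose T1 W := proj1_sig (constructive_indefinite_description _ (Hres W)).
have HT1 : forall W, exists Y, A (T1 W) Y /\ W = vadd (T1 W) (Psi Y).
  move=> W; exact: (proj2_sig (constructive_indefinite_description _ (Hres W))).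
have HT1iff : forall W P, (exists Y, A P Y /\ W = vadd P (Psi Y)) <-> P = T1 W.
  move=> W P; split.
    move=> [Y [HA HW]]; have [Y' [HA' HW']] := HT1 W.
    by apply: (Huniq _ _ _ _ HA HA'); rewrite -HW -HW'.
  by move=> ->; exact: HT1.
have Hfirm : forall a b, ipP Phi (vsub (T1 a) (T1 b)) (vsub (T1 a) (T1 b))
    <= ipP Phi (vsub a b) (vsub (T1 a) (T1 b)).
  move=> a b; have [Ya [HAa Ha]] := HT1 a; have [Yb [HAb Hb]] := HT1 b.
  have H := Amono _ _ _ _ HAa HAb.
  set d := vsub (T1 a) (T1 b) in H *.
  have Hab : vsub a b = vadd d (vsub (Psi Ya) (Psi Yb)).
    have : vsub (vadd (T1 a) (Psi Ya)) (vadd (T1 b) (Psi Yb)) = vadd d (vsub (Psi Ya) (Psi Yb)).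
      by apply: functional_extensionality => t; rewrite /d /vadd /vsub; ring.
    by rewrite -Ha -Hb.
  rewrite /ipP (HPsym (vsub a b)) Hab HPadd HPhiPsi dot_vaddr; lra.
have Hc : / 2 < delta * betaE.
  have H1 : 0 < 2 * betaE by lra.
  have := Rmult_lt_compat_l _ _ _ H1 Hdelta.
  rewrite Rinv_r; lra.
have Hcoco : cocoerciveP Phi (delta * betaE) (fun W => Psi (B W)).
  move=> u v.
  rewrite /normP pow2_sqrt; last exact: HPpos0.
  have Hh := HPhiPsi (B u) (B v).
  set h := vsub (Psi (B u)) (Psi (B v)) in Hh *.
  set gg := vsub (B u) (B v) in Hh *.
  rewrite /ipP Hh.
  have H1 := HPpos h; rewrite Hh in H1.
  have H2 := dot_ge0 (vadd (vscale delta h) (vscale (-1) gg)).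
  rewrite dot_sq_comb dot_vscaler dot_vscalel dot_vscaler in H2.
  have H3 := @B_coco N M m nd src dst Am bv gradf Hsd chi betaE HA4 HbetaE HbetaE1 HbetaE2 u v.
  rewrite -/gg in H3.
  have Hhg : delta * dot h gg <= dot gg gg.
    have := Rmult_le_compat_l _ _ _ (Rlt_le _ _ Hdelta0) H1; nra.
  have := Rmult_le_compat_l _ _ _ (Rlt_le _ _ HbetaE) Hhg; nra.
split; [| split; [| split]].
- split.
    move=> w u w' u' [Y [HA ->]] [Y' [HA' ->]].
    rewrite /ipP HPhiPsi; exact: Amono.
  move=> w u Hmax.
  have [P [Y [HA HW]]] := Hres (vadd w u).
  have H := Hmax P (Psi Y) (ex_intro _ Y (conj HA erefl)).
  have Hu : vsub u (Psi Y) = vscale (-1) (vsub w P).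
    apply: functional_extensionality => t; have := equal_f HW t.
    rewrite /vadd /vsub /vscale; lra.
  rewrite Hu /ipP HPscale dot_vscaler in H.
  have H2 := HPpos (vsub w P); have H0 := dot_ge0 (vsub w P).
  have : dot (vsub w P) (vsub w P) = 0 by nra.
  move/dot_eq0 => Hz.
  have HwP : w = P.
    apply: functional_extensionality => t; have := equal_f Hz t; rewrite /vsub /vzero; lra.
  subst w; exists Y; split => //.
  apply: functional_extensionality => t; have := equal_f HW t; rewrite /vadd; lra.
- exists T1; split; first exact: HT1iff.
  split; first exact: (firm_avg _ Phi HPadd HPscale HPsym HPpos0 T1 Hfirm).
  have -> : 2 * delta * betaE / (4 * delta * betaE - 1) =
    2 * (delta * betaE) / (4 * (delta * betaE) - 1) by rewrite !Rmult_assoc.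
  exact: (comp_avg _ Phi HPadd HPscale HPsym HPpos0 (delta * betaE)
    (fun W => Psi (B W)) T1 Hc Hcoco Hfirm).
- exact: Hcoco.
- rewrite Rmult_assoc.
  exact: (coco_avg _ Phi HPadd HPscale HPsym HPpos0 (delta * betaE) (fun W => Psi (B W)) Hc Hcoco).
Qed.
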